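(* For a cograph $\mathcal{C}$ the following are equivalent: (1) $\mathcal{C}$ is a PL-cograph; (2) for every edge value $e$ and every two distinct pairs $\{P,Q\}\neq\{R,S\}$ with $\mathcal{C}(P,Q)=\mathcal{C}(R,S)=e$, every pair of distinct points of the (3- or 4-element) set $\{P,Q,R,S\}$ has edge value $e$; (3) every block of $\mathcal{C}$ is a complete graph; (4) any two distinct blocks of $\mathcal{C}$ have at most one vertex in common.
   Context: A cograph is a function $\mathcal{C}$ assigning to each unordered pair $\{P,Q\}$ of distinct elements of a point set a value $\mathcal{C}(P,Q)$ (an edge). A PL-cograph is a cograph satisfying: (1a) for distinct points $P,Q,R$, if $\mathcal{C}(P,Q)=\mathcal{C}(Q,R)$ then $\mathcal{C}(P,Q)=\mathcal{C}(P,R)$; (1b) for distinct points $P,Q,R,S$, if $\mathcal{C}(P,Q)=\mathcal{C}(R,S)$ then $\mathcal{C}(P,Q)=\mathcal{C}(P,R)=\mathcal{C}(P,S)=\mathcal{C}(Q,R)=\mathcal{C}(Q,S)$. For an edge value $e$, the block of $e$ is the graph whose vertices are all points lying in some pair with value $e$ and whose edges are exactly the pairs with value $e$; it is complete if every two of its vertices form a pair with value $e$. *)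

(* Defs.v *)
(* A cograph on a point set [T] with edge values in [E] is represented by a
   function [C : T -> T -> E] that is symmetric on distinct points; its values
   on the diagonal [C P P] are irrelevant and never used. *)

Section Cographs.
Context {T E : Type}.

Definition is_cograph (C : T -> T -> E) : Prop :=
  forall P Q : T, P <> Q -> C P Q = C Q P.

Definition PL_1a (C : T -> T -> E) : Prop :=
  forall P Q R : T, P <> Q -> P <> R -> Q <> R ->
    C P Q = C Q R -> C P Q = C P R.

Definition PL_1b (C : T -> T -> E) : Prop :=
  forall P Q R S : T,
    P <> Q -> P <> R -> P <> S -> Q <> R -> Q <> S -> R <> S ->
    C P Q = C R S ->
    C P Q = C P R /\ C P Q = C P S /\ C P Q = C Q R /\ C P Q = C Q S.

Definition PL_cograph (C : T -> T -> E) : Prop := PL_1a C /\ PL_1b C.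

Definition same_value_closed (C : T -> T -> E) : Prop :=
  forall (e : E) (P Q R S : T),
    P <> Q -> R <> S ->
    ~ ((P = R /\ Q = S) \/ (P = S /\ Q = R)) ->
    C P Q = e -> C R S = e ->
    forall X Y : T,
      (X = P \/ X = Q \/ X = R \/ X = S) ->
      (Y = P \/ Y = Q \/ Y = R \/ Y = S) ->
      X <> Y -> C X Y = e.

(* Vertices of the block of e: points lying in some pair with value e.
   The edges of the block are exactly the pairs with value e. *)
Definition block_vertex (C : T -> T -> E) (e : E) (X : T) : Prop :=
  exists Y : T, X <> Y /\ C X Y = e.

Definition block_complete (C : T -> T -> E) (e : E) : Prop :=
  forall X Y : T, block_vertex C e X -> block_vertex C e Y -> X <> Y ->
    C X Y = e.

Definition all_blocks_complete (C : T -> T -> E) : Prop :=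
  forall e : E, block_complete C e.

(* Condition (4): blocks of distinct edge values share at most one vertex.
   (Blocks of distinct attained edge values have distinct edge sets, hence are
   distinct; a non-attained value has an empty block, so the condition is
   vacuous for it.) *)
Definition blocks_meet_at_most_once (C : T -> T -> E) : Prop :=
  forall (e f : E), e <> f ->
    forall X Y : T,
      block_vertex C e X -> block_vertex C f X ->
      block_vertex C e Y -> block_vertex C f Y ->
      X = Y.

End Cographs.

(* Main.v *)
Require Import Defs.
From Stdlib Require Import Classical.

Lemma l13 (T E : Type) (C : T -> T -> E) : is_cograph C ->
  PL_cograph C -> all_blocks_complete C.
Proof.
  intros Hs [Ha Hb] e X Y [X' [HX1 HX2]] [Y' [HY1 HY2]] Hxy.
  destruct (classic (X' = Y)) as [->|n1]; [exact HX2|].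
  destruct (classic (Y' = X)) as [->|n2]; [rewrite Hs; auto|].
  destruct (classic (X' = Y')) as [<-|n3].
  - rewrite <- HX2. symmetry. apply Ha; auto.
    rewrite HX2, Hs; auto.
  - rewrite <- HX2. symmetry.
    apply (Hb X X' Y Y'); auto; congruence.
Qed.

Lemma l31 (T E : Type) (C : T -> T -> E) : is_cograph C ->
  all_blocks_complete C -> PL_cograph C.
Proof.
  intros Hs H3. split.
  - intros P Q R h1 h2 h3 h. symmetry. apply H3; auto.
    + exists Q; auto.
    + exists Q; split; auto. rewrite Hs; auto.
  - intros P Q R S h1 h2 h3 h4 h5 h6 h.
    assert (vP : block_vertex C (C P Q) P) by (exists Q; auto).
    assert (vQ : block_vertex C (C P Q) Q) by (exists P; split; auto; apply Hs; auto).
    assert (vR : block_vertex C (C P Q) R) by (exists S; auto).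
    assert (vS : block_vertex C (C P Q) S) by (exists R; split; auto; rewrite h; apply Hs; auto).
    repeat split; symmetry; apply H3; auto.
Qed.

Lemma l32 (T E : Type) (C : T -> T -> E) : is_cograph C ->
  all_blocks_complete C -> same_value_closed C.
Proof.
  intros Hs H3 e P Q R S h1 h2 hn hp hr X Y hX hY hxy.
  assert (v : forall Z, (Z = P \/ Z = Q \/ Z = R \/ Z = S) -> block_vertex C e Z).
  { intros Z [e1|[e1|[e1|e1]]]; subst Z.
    - exists Q; auto.
    - exists P; split; auto; rewrite Hs; auto.
    - exists S; auto.
    - exists R; split; auto; rewrite Hs; auto. }
  apply H3; auto.
Qed.

Lemma l23 (T E : Type) (C : T -> T -> E) : is_cograph C ->
  same_value_closed C -> all_blocks_complete C.
Proof.
  intros Hs H2 e X Y [X' [HX1 HX2]] [Y' [HY1 HY2]] Hxy.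
  destruct (classic ((X = Y /\ X' = Y') \/ (X = Y' /\ X' = Y))) as [[[? ?]|[h5 h6]]|n].
  - contradiction.
  - rewrite <- h6; exact HX2.
  - apply (H2 e X X' Y Y'); auto.
Qed.

Lemma l34 (T E : Type) (C : T -> T -> E) : is_cograph C ->
  all_blocks_complete C -> blocks_meet_at_most_once C.
Proof.
  intros Hs H3 e f hef X Y a b c d. apply NNPP; intro n.
  apply hef. rewrite <- (H3 e X Y), <- (H3 f X Y); auto.
Qed.

Lemma l43 (T E : Type) (C : T -> T -> E) : is_cograph C ->
  blocks_meet_at_most_once C -> all_blocks_complete C.
Proof.
  intros Hs H4 e X Y vX vY hxy. apply NNPP; intro n.
  apply hxy. apply (H4 e (C X Y)); auto.
  - exists Y; auto.
  - exists X; split; auto; apply Hs; auto.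
Qed.

Theorem proposition5p1 (T E : Type) (C : T -> T -> E) :
  is_cograph C ->
  (PL_cograph C <-> same_value_closed C) /\
  (PL_cograph C <-> all_blocks_complete C) /\
  (PL_cograph C <-> blocks_meet_at_most_once C).
Proof.
  intros Hs.
  pose proof (l13 T E C Hs). pose proof (l31 T E C Hs).
  pose proof (l32 T E C Hs). pose proof (l23 T E C Hs).
  pose proof (l34 T E C Hs). pose proof (l43 T E C Hs).
  intuition.
Qed.
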